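(* For each of the Coloring, K-SAT and NAE-K-SAT models, for all positive integers $N,M,m$ and every $0<\delta<1/2$, $$p(N,M+m)\ge\delta^m\,p(N,M)-(2\delta)^{M+1}\exp\big(\mathcal{H}(\delta)N+o(N)\big),$$ where $\mathcal{H}(\delta)=-\delta\log\delta-(1-\delta)\log(1-\delta)$ is the entropy function and the $o(N)$ term depends only on $N$ and $\delta$.
   Context: $\mathbb{G}(N,M)$: random hypergraph on $[N]$ with $M$ directed $K$-hyperedges chosen independently and uniformly from $[N]^K$. $\chi=\{0,\dots,q-1\}$; $H(x)=\sum_{e}H_e(x_e)$, $H(G)=\max_{x\in\chi^N}H(x)$. Models: $q$-Coloring ($K=2$, $H_e(x,y)=\mathbf 1[x\ne y]$); K-SAT ($q=2$, independent uniform $a_e\in\{0,1\}^K$ per hyperedge, $H_e(a_e)=0$, $1$ otherwise); NAE-K-SAT ($q=2$, $H_e(a_e)=H_e(\mathbf1-a_e)=0$, $1$ otherwise). $p(N,M)=\mathbb{P}(H(\mathbb{G}(N,M))=M)$. *)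

(* Defs.v *)
From mathcomp Require Import all_boot.
From Stdlib Require Import Reals.

Set Implicit Arguments.
Unset Strict Implicit.
Unset Printing Implicit Defensive.

(* The three models. Coloring q : q colors, K = 2.  KSAT K / NAEKSAT K : q = 2. *)
Inductive model : Type :=
| Coloring of nat
| KSAT of nat
| NAEKSAT of nat.

Definition valid_model (mdl : model) : Prop :=
  match mdl with
  | Coloring q => (2 <= q)%N
  | KSAT K => (2 <= K)%N
  | NAEKSAT K => (2 <= K)%N
  end.

Definition unif_prob (T : finType) (P : pred T) : R :=
  (INR #|P| / INR #|T|)%R.

(* Coloring: M directed edges chosen independently uniformly from [N]^2;
   a graph is "fully satisfied" (H(G) = M) iff some x in [q]^N has
   x(u) <> x(v) on every edge. *)
Definition col_sat (q N M : nat) (G : {ffun 'I_M -> 'I_N * 'I_N}) : bool :=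
  [exists x : {ffun 'I_N -> 'I_q}, [forall e, x (G e).1 != x (G e).2]].

(* K-SAT: each hyperedge is a K-tuple of vertices together with an independent
   uniform a_e in {0,1}^K (false = 0, true = 1); H_e(y) = 0 iff y = a_e. *)
Definition ksat_sat (K N M : nat)
    (G : {ffun 'I_M -> {ffun 'I_K -> 'I_N} * {ffun 'I_K -> bool}}) : bool :=
  [exists x : {ffun 'I_N -> bool},
    [forall e, [ffun j => x ((G e).1 j)] != (G e).2]].

(* NAE-K-SAT: H_e(y) = 0 iff y = a_e or y = 1 - a_e. *)
Definition naesat_sat (K N M : nat)
    (G : {ffun 'I_M -> {ffun 'I_K -> 'I_N} * {ffun 'I_K -> bool}}) : bool :=
  [exists x : {ffun 'I_N -> bool},
    [forall e, ([ffun j => x ((G e).1 j)] != (G e).2)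
            && ([ffun j => x ((G e).1 j)] != [ffun j => ~~ (G e).2 j])]].

(* p(N,M) = P(H(G(N,M)) = M). *)
Definition p (mdl : model) (N M : nat) : R :=
  match mdl with
  | Coloring q => unif_prob (@col_sat q N M)
  | KSAT K => unif_prob (@ksat_sat K N M)
  | NAEKSAT K => unif_prob (@naesat_sat K N M)
  end.

Definition Hent (d : R) : R :=
  (- d * ln d - (1 - d) * ln (1 - d))%R.

(* Main.v *)
Require Import Defs.
From mathcomp Require Import all_boot all_order all_algebra.
From Stdlib Require Import Reals Lra Lia.
From mathcomp Require Import Rstruct.
Import Order.TTheory GRing.Theory Num.Theory.
Set Implicit Arguments.
Unset Strict Implicit.
Unset Printing Implicit Defensive.

Lemma cv_const (c : R) : Un_cv (fun N => (c / INR N)%R) 0%R.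
Proof.
move=> eps he; have [n0 hn0] := INR_archimed eps (Rabs c) he.
exists n0 => n hn; rewrite /R_dist Rminus_0_r.
have hle : (INR n0 <= INR n)%R by apply: le_INR; lia.
have ha : (0 <= Rabs c)%R by apply: Rabs_pos.
have hpos : (0 < INR n)%R by nra.
have h2 : (Rabs c < eps * INR n)%R by nra.
rewrite /Rdiv Rabs_mult Rabs_inv (Rabs_right (INR n)); last by lra.
apply: (Rmult_lt_reg_r (INR n)) => //.
rewrite Rmult_assoc Rinv_l; lra.
Qed.

Lemma final_arith (S S' B c d F H : R) (M m : nat) :
  (0 < c)%R -> (0 < d < 1/2)%R -> (0 <= B)%R -> (B <= F * ((d + d) * c) ^ M)%R ->
  (F <= exp H)%R -> ((d * c) ^ m * (S - B) <= S')%R ->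
  (S' / c ^ (M + m) >= d ^ m * (S / c ^ M) - (2 * d) ^ (M + 1) * exp (H + - ln (2 * d)))%R.
Proof.
move=> hc hd hB hBF hF hS.
have cM : (0 < c ^ M)%R by apply: pow_lt; lra.
have cm : (0 < c ^ m)%R by apply: pow_lt; lra.
have dm : (0 < d ^ m)%R by apply: pow_lt; lra.
have dm1 : (d ^ m <= 1)%R by rewrite -(pow1 m); apply: pow_incr; lra.
have tdM : (0 < (2 * d) ^ M)%R by apply: pow_lt; lra.
have e1 : ((2 * d) ^ (M + 1) * exp (H + - ln (2 * d)) = (2 * d) ^ M * exp H)%R.
  rewrite pow_add exp_plus exp_Ropp exp_ln; last by lra.
  rewrite /= ; field; lra.
rewrite e1.
have e2 : (((d + d) * c) ^ M = (2 * d) ^ M * c ^ M)%R.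
  rewrite -Rpow_mult_distr; f_equal; ring.
rewrite e2 in hBF.
have e3 : ((d * c) ^ m = d ^ m * c ^ m)%R by apply: Rpow_mult_distr.
rewrite e3 in hS.
rewrite pow_add.
have hBc : (B / c ^ M <= (2 * d) ^ M * exp H)%R.
  apply: (Rmult_le_reg_r (c ^ M)) => //.
  rewrite /Rdiv Rmult_assoc Rinv_l; last by lra.
  have : (0 <= exp H - F)%R by lra.
  have : (0 <= ((2 * d) ^ M * c ^ M) * (exp H - F))%R.
    apply: Rmult_le_pos; nra.
  nra.
have hS2 : (d ^ m * (S - B) / c ^ M <= S' / (c ^ M * c ^ m))%R.
  rewrite /Rdiv Rinv_mult.
  apply: (Rmult_le_reg_r (c ^ M * c ^ m)); first by nra.
  have -> : (S' * (/ c ^ M * / c ^ m) * (c ^ M * c ^ m))%R = S' by field; lra.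
  have -> : (d ^ m * (S - B) * / c ^ M * (c ^ M * c ^ m))%R = (d ^ m * c ^ m * (S - B))%R by field; lra.
  exact: hS.
have hB0 : (0 <= B / c ^ M)%R.
  rewrite /Rdiv; apply: Rmult_le_pos; first by lra.
  by apply: Rlt_le; apply: Rinv_0_lt_compat; lra.
have e4 : (d ^ m * (S - B) / c ^ M = d ^ m * (S / c ^ M) - d ^ m * (B / c ^ M))%R by field; lra.
rewrite e4 in hS2.
have : (d ^ m * (B / c ^ M) <= B / c ^ M)%R by nra.
lra.
Qed.

Lemma card_pair (A B : finType) (P : A -> B -> bool) :
  #|[pred e : A * B | P e.1 e.2]| = (\sum_(a : A) #|[pred b | P a b]|)%N.
Proof.
rewrite -sum1_card.
rewrite (eq_bigl (fun e : A * B => xpredT e.1 && P e.1 e.2)) //.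
rewrite -(pair_big_dep xpredT P (fun _ _ => 1%N)) /=.
by apply: eq_bigr => a _; rewrite -sum1_card.
Qed.

Definition catf (E : finType) M m (f : {ffun 'I_M -> E}) (g : {ffun 'I_m -> E})
  : {ffun 'I_(M+m) -> E} :=
  [ffun i => match fintype.split i with inl j => f j | inr k => g k end].

Lemma catf_inj (E : finType) M m :
  injective (fun fg : {ffun 'I_M -> E} * {ffun 'I_m -> E} => catf fg.1 fg.2).
Proof.
move=> [f g] [f' g'] /= H.
have H1 : forall j, f j = f' j.
  move=> j; have := congr1 (fun h : {ffun _ -> E} => h (lshift m j)) H.
  by rewrite /catf !ffunE (unsplitK (inl _ j)).
have H2 : forall k, g k = g' k.
  move=> k; have := congr1 (fun h : {ffun _ -> E} => h (rshift M k)) H.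
  by rewrite /catf !ffunE (unsplitK (inr _ k)).
by congr pair; apply/ffunP.
Qed.

Local Open Scope ring_scope.

Definition satF (X E : finType) (ok : X -> E -> bool) n (G : {ffun 'I_n -> E}) :=
  [exists x, [forall e, ok x (G e)]].

Lemma general_count (X E : finType) (ok : X -> E -> bool) (M m : nat)
  (Bad : pred {ffun 'I_M -> E}) (d : R) :
  0 <= d ->
  (forall G : {ffun 'I_M -> E}, satF ok G -> ~~ Bad G ->
    exists x, [forall e, ok x (G e)] /\ d * #|E|%:R <= #|[pred y | ok x y]|%:R) ->
  (d * #|E|%:R) ^+ m * (#|[pred G | @satF X E ok M G]|%:R - #|Bad|%:R)
   <= #|[pred G | @satF X E ok (M + m) G]|%:R.
Proof.
move=> d0 H.
set C := [pred f : {ffun 'I_M -> E} | satF ok f && ~~ Bad f].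
have h1 : (#|[pred fg : {ffun 'I_M -> E} * {ffun 'I_m -> E} |
              C fg.1 && satF ok (catf fg.1 fg.2)]| <= #|[pred G | @satF X E ok (M + m) G]|)%nat.
  rewrite -(card_imset _ (@catf_inj E M m)).
  apply: subset_leq_card; apply/subsetP => G /imsetP [[f g] /= + ->].
  by rewrite !inE => /andP [].
have h2 : #|[pred fg : {ffun 'I_M -> E} * {ffun 'I_m -> E} |
              C fg.1 && satF ok (catf fg.1 fg.2)]| =
          (\sum_(f : {ffun 'I_M -> E}) (if C f then #|[pred g : {ffun 'I_m -> E} | satF ok (catf f g)]| else 0))%nat.
  have -> := card_pair (fun f g => C f && satF ok (catf f g)).
  apply: eq_bigr => f _; case: (C f) => //=.
  by apply: eq_card0.
have h3 : forall f, C f -> (d * #|E|%:R) ^+ m <= #|[pred g : {ffun 'I_m -> E} | satF ok (catf f g)]|%:R.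
  move=> f /andP [sf bf]; have [x [hx hd]] := H f sf bf.
  have sub : (ffun_on [pred y | ok x y] \subset [pred g : {ffun 'I_m -> E} | satF ok (catf f g)]).
    apply/subsetP => g /ffun_onP hg; rewrite inE; apply/existsP; exists x.
    apply/forallP => i; rewrite /catf ffunE; case: fintype.split => [j|k].
      by move/forallP: hx; apply.
    by have := hg k.
  apply: le_trans (_ : (#|[pred y | ok x y]|%:R) ^+ m <= _).
    by apply: lerXn2r; rewrite ?nnegrE ?mulr_ge0 ?ler0n.
  have := subset_leq_card sub; rewrite card_ffun_on card_ord => hc.
  by rewrite -natrX ler_nat.
have h4 : (#|[pred G | @satF X E ok M G]|%:R - #|Bad|%:R <= (#|C|%:R : R)).
  rewrite lerBlDr -natrD ler_nat.
  apply: leq_trans (_ : #|[predU C & Bad]| <= _)%nat; last by rewrite -cardUI leq_addr.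
  apply: subset_leq_card; apply/subsetP => G; rewrite !inE /C /=.
  by rewrite [G \in Bad]unfold_in; case: (Bad G) => ->; rewrite ?orbT.
apply: le_trans _ (_ : ((#|[pred fg : {ffun 'I_M -> E} * {ffun 'I_m -> E} |
              C fg.1 && satF ok (catf fg.1 fg.2)]|)%:R <= _)); last by rewrite ler_nat.
rewrite h2 natr_sum.
apply: le_trans (_ : \sum_f (if C f then (d * #|E|%:R) ^+ m else 0) <= _).
  rewrite -big_mkcond /= sumr_const -(mulr_natl ((d * #|E|%:R) ^+ m)) mulrC.
  apply: ler_wpM2r; first by rewrite exprn_ge0 // mulr_ge0.
  exact: h4.
apply: ler_sum => f _; case: ifP => Cf; first exact: h3.
by [].
Qed.

Local Close Scope ring_scope.

Lemma w_lb (N k : nat) (d : R) : (0 < d < 1/2)%R -> (k <= N)%nat ->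
  (INR k <= d * INR N)%R -> (exp (- (Hent d * INR N)) <= d ^ k * (1-d)^(N-k))%R.
Proof.
move=> hd /ssrnat.leP hk hkN.
have d1 : (0 < 1 - d)%R by lra.
rewrite -(Rpower_pow k); last by lra.
rewrite -(Rpower_pow (N - k)%nat (1-d)) //.
rewrite /Rpower -exp_plus.
have -> : INR (subn N k) = (INR N - INR k)%R by rewrite -minus_INR.
have hl : (ln d < ln (1 - d))%R by apply: ln_increasing; lra.
have : (0 <= (d * INR N - INR k) * (ln (1-d) - ln d))%R.
  apply: Rmult_le_pos; lra.
move=> h.
have e : (INR k * ln d + (INR N - INR k) * ln (1 - d) - - (Hent d * INR N)
          = (d * INR N - INR k) * (ln (1-d) - ln d))%R by rewrite /Hent; ring.
destruct (Rle_lt_or_eq_dec _ _ h) as [h'|h'].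
  apply: Rlt_le; apply: exp_increasing; lra.
rewrite -h' in e; right; f_equal; lra.
Qed.



Local Open Scope ring_scope.
Lemma hd_conv (d : R) : (0 < d < 1/2)%R -> 0 < d /\ d *+ 2 < 1.
Proof. move=> hd; split; apply/RltP; [rewrite -R0E; lra | rewrite mulr2n -RplusE -R1E; lra]. Qed.
From mathcomp.algebra_tactics Require Import ring lra.
Lemma sum_weights (N : nat) (a b : R) :
  \sum_(f : {ffun 'I_N -> bool}) \prod_(i < N) (if f i then a else b) = (a + b) ^+ N.
Proof.
rewrite -(@bigA_distr_bigA R 0 1 *%R +%R _ _ (fun (i : 'I_N) (c : bool) => if c then a else b)) /=.
rewrite (eq_bigr (fun _ => a + b)); last by move=> i _; rewrite big_bool.
by rewrite prodr_const card_ord.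
Qed.

Lemma weight_eq (N : nat) (a b : R) (f : {ffun 'I_N -> bool}) :
  \prod_(i < N) (if f i then a else b) =
  a ^+ #|[pred i | f i]| * b ^+ (N - #|[pred i | f i]|).
Proof.
rewrite (bigID (fun i => f i)) /=.
rewrite (eq_bigr (fun=> a)); last by move=> i ->.
rewrite [X in _ * X](eq_bigr (fun=> b)); last by move=> i /negbTE ->.
rewrite !prodr_const; congr (_ * _ ^+ _).
have h := cardC [pred i | f i]; rewrite card_ord in h.
apply/eqP; rewrite -(eqn_add2l #|[pred i | f i]|) subnKC.
  by apply/eqP; exact: h.
by apply: leq_trans (max_card _) _; rewrite card_ord.
Qed.

Definition Sfam (N : nat) (d : R) :=
  [pred f : {ffun 'I_N -> bool} | Rleb (#|[pred i | f i]|%:R) (d * N%:R)].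

Lemma count_Sfam (N : nat) (d : R) : (0 < d < 1/2)%R ->
  #|Sfam N d|%:R <= exp (Hent d * INR N).
Proof.
move=> hd.
have [d0' d2] := @hd_conv d hd.
have d0 : 0 <= d by apply: ltW.
have d1 : 0 <= 1 - d by rewrite mulr2n in d2; clear hd; lra.
have key : #|Sfam N d|%:R * exp (- (Hent d * INR N)) <=
   \sum_(f : {ffun 'I_N -> bool}) \prod_(i < N) (if f i then d else 1 - d).
  rewrite mulr_natl -sumr_const.
  apply: le_trans (_ : \sum_(f in Sfam N d) \prod_(i < N) (if f i then d else 1 - d) <= _).
    apply: ler_sum => f; rewrite inE => /RlebP hf.
    rewrite weight_eq -!RpowE; apply/RleP; apply: w_lb => //.
      by apply: leq_trans (max_card _) _; rewrite card_ord.
    by rewrite !INRE.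
  rewrite [X in _ <= X](bigID (mem (Sfam N d))) /= lerDl.
  apply: sumr_ge0 => f _; apply: prodr_ge0 => i _; by case: (f i).
rewrite sum_weights addrC subrK expr1n in key.
have e1 : exp (- (Hent d * INR N)) * exp (Hent d * INR N) = 1.
  by rewrite -RmultE -exp_plus Rplus_opp_l exp_0.
have ep : 0 <= exp (Hent d * INR N) by apply/RleP; apply: Rlt_le; apply: exp_pos.
have := ler_wpM2r ep key; rewrite -mulrA e1 mulr1 mul1r //.
Qed.



Ltac rconv := rewrite -?RplusE -?RmultE -?RminusE -?RoppE -?R0E -?R1E.

Definition okC (q N : nat) (x : {ffun 'I_N -> 'I_q}) (e : 'I_N * 'I_N) := x e.1 != x e.2.

Definition BadC (N M : nat) (d : R) (G : {ffun 'I_M -> 'I_N * 'I_N}) :=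
  [exists f : {ffun 'I_N -> bool}, (f \in Sfam N d) && [forall e, f (G e).1 || f (G e).2]].

Lemma col_good (q N M : nat) (d : R) : (0 < d < 1/2)%R ->
  forall (G : {ffun 'I_M -> 'I_N * 'I_N}) (x : {ffun 'I_N -> 'I_q}),
  [forall e, okC x (G e)] -> ~~ BadC d G ->
  d * #|{: 'I_N * 'I_N}|%:R <= #|[pred y | okC x y]|%:R.
Proof.
move=> hd G x hx hB.
rewrite leNgt; apply/negP => hlt.
set same := fun u : 'I_N => #|[pred v : 'I_N | x u == x v]|.
have hsum : (\sum_u same u = #|[pred e : ('I_N * 'I_N)%type | x e.1 == x e.2]|)%nat.
  by rewrite (card_pair (fun a b => x a == x b)).
have hC : (#|[pred e : ('I_N * 'I_N)%type | x e.1 == x e.2]| + #|[pred y | okC x y]|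
            = #|{: 'I_N * 'I_N}|)%nat.
  by rewrite -(cardC [pred e : ('I_N * 'I_N)%type | x e.1 == x e.2]).
rewrite card_prod card_ord in hC.
have [u hu] : exists u, (1 - d) * N%:R < (same u)%:R.
  case: (boolP [exists u, (1 - d) * N%:R < (same u)%:R]) => [/existsP //|/existsPn hn].
  have : (\sum_u (same u)%:R <= \sum_(u : 'I_N) ((1 - d) * N%:R) :> R).
    by apply: ler_sum => u _; rewrite leNgt; apply: hn.
  rewrite sumr_const card_ord -natr_sum hsum.
  move: hlt; rewrite card_prod card_ord natrM => hlt.
  rewrite -(mulr_natl ((1 - d) * N%:R)) => h2.
  have hCR : (#|[pred e : ('I_N * 'I_N)%type | x e.1 == x e.2]|%:R + #|[pred y | okC x y]|%:R
     = N%:R * N%:R :> R) by rewrite -natrD -natrM hC.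
  have hN : 0 <= N%:R :> R by rewrite ler0n.
  have [d0 d2] := @hd_conv d hd.
  exfalso; clear hn hsum hC; nra.
pose f := [ffun v : 'I_N => x u != x v].
have hf : (#|[pred i | f i]| + same u = N)%nat.
  apply: etrans (_ : _ = #|'I_N|) (card_ord N).
  rewrite -(cardC [pred i | f i]); congr (_ + _)%nat.
  by apply: eq_card => v; rewrite !inE /f ffunE negbK.
move/negP: hB; apply; apply/existsP; exists f; apply/andP; split.
  rewrite inE; apply/RlebP.
  have hfR : (#|[pred i | f i]|%:R + (same u)%:R = N%:R :> R) by rewrite -natrD hf.
  have [d0 d2] := @hd_conv d hd.
  apply/RleP; rewrite RmultE; clear hf; lra.
apply/forallP => e; move/forallP: hx => /(_ e); rewrite /okC /f !ffunE.
apply: contraNT; rewrite negb_or !negbK => /andP [/eqP <- /eqP <-].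
by rewrite eqxx.
Qed.

Lemma touch_card (N : nat) (f : {ffun 'I_N -> bool}) :
  (#|[pred y : ('I_N * 'I_N)%type | f y.1 || f y.2]| <= #|[pred i | f i]| * N + N * #|[pred i | f i]|)%nat.
Proof.
set A := [set i | f i].
have eA : #|[pred i | f i]| = #|A| by apply: eq_card => i; rewrite !inE.
apply: leq_trans (_ : #|setX A [set: 'I_N] :|: setX [set: 'I_N] A| <= _)%nat.
  apply: subset_leq_card; apply/subsetP => y; rewrite !inE /=.
  by case/orP => ->; rewrite ?orbT.
apply: leq_trans (leq_card_setU _ _) _.
by rewrite !cardsX cardsT card_ord eA.
Qed.

Lemma bad_count (N M : nat) (d : R) : (0 < d < 1/2)%R ->
  #|[pred G : {ffun 'I_M -> 'I_N * 'I_N} | BadC d G]|%:R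
    <= exp (Hent d * INR N) * (d *+ 2 * (N%:R * N%:R)) ^+ M.
Proof.
move=> hd.
have [d0 d2] := @hd_conv d hd.
set T := fun f : {ffun 'I_N -> bool} => [pred y : ('I_N * 'I_N)%type | f y.1 || f y.2].
have h1 : (#|[pred G : {ffun 'I_M -> 'I_N * 'I_N} | BadC d G]| <=
          \sum_(f in Sfam N d) expn #|T f| M)%nat.
  rewrite -sum1_card.
  apply: leq_trans (_ : \sum_(G in [pred G : {ffun 'I_M -> 'I_N * 'I_N} | BadC d G])
       \sum_(f in Sfam N d) ([forall e, f (G e).1 || f (G e).2] : nat) <= _)%nat.
    apply: leq_sum => G; rewrite inE => /existsP [f /andP [hf ht]].
    by rewrite (bigD1 f) //= ht.
  apply: leq_trans (_ : \sum_(G : {ffun 'I_M -> 'I_N * 'I_N})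
       \sum_(f in Sfam N d) ([forall e, f (G e).1 || f (G e).2] : nat) <= _)%nat.
    by rewrite [X in (_ <= X)%nat](bigID (mem [pred G : {ffun 'I_M -> 'I_N * 'I_N} | BadC d G])) /= leq_addr.
  rewrite exchange_big /=; apply: leq_sum => f hf.
  have hc := card_ffun_on 'I_M (T f); rewrite card_ord in hc; rewrite -hc.
  rewrite -sum1_card big_mkcond /=.
  rewrite [X in (_ <= X)%nat]big_mkcond /=.
  apply: leq_sum => G _; rewrite !inE.
  case hG: [forall e, f (G e).1 || f (G e).2] => //.

have h2 : forall f, f \in Sfam N d -> (expn #|T f| M)%:R <= (d *+ 2 * (N%:R * N%:R)) ^+ M :> R.
  move=> f; rewrite inE => /RlebP /RleP; rewrite RmultE => hf.
  rewrite natrX; apply: lerXn2r; rewrite ?nnegrE ?ler0n //.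
    by apply: mulr_ge0; [rewrite mulrn_wge0 // ltW | rewrite mulr_ge0].
  apply: le_trans (_ : (#|[pred i | f i]| * N + N * #|[pred i | f i]|)%:R <= _).
    by rewrite ler_nat touch_card.
  rewrite natrD !natrM.
  have hN : 0 <= N%:R :> R by rewrite ler0n.
  clear hd; nra.
apply: le_trans (_ : (\sum_(f in Sfam N d) (expn #|T f| M)%:R) <= _).
  by rewrite -natr_sum ler_nat.
apply: le_trans (_ : \sum_(f in Sfam N d) (d *+ 2 * (N%:R * N%:R)) ^+ M <= _).
  exact: ler_sum.
rewrite sumr_const -(mulr_natl ((d *+ 2 * (N%:R * N%:R)) ^+ M)); apply: ler_wpM2r.
  by rewrite exprn_ge0 // mulr_ge0 // ?mulr_ge0 ?ler0n // mulrn_wge0 // ltW.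
exact: count_Sfam.
Qed.

Lemma bad_pairs (A B : finType) (g1 g2 : A -> B) :
  (#|[pred e : (A * B)%type | (e.2 == g1 e.1) || (e.2 == g2 e.1)]| <= 2 * #|A|)%nat.
Proof.
apply: leq_trans (_ : #|[set (a, g1 a) | a in A] :|: [set (a, g2 a) | a in A]| <= _)%nat.
  apply: subset_leq_card; apply/subsetP => [[a b]]; rewrite !inE /=.
  case/orP => /eqP ->; apply/orP; [left|right]; apply/imsetP; by exists a.
apply: leq_trans (leq_card_setU _ _) _.
by rewrite mul2n -addnn leq_add // leq_imset_card.
Qed.

Lemma good_from_bad (E : finType) (okp : pred E) (d : R) : (0 < d < 1/2)%R ->
  (2 * #|[predC okp]| <= #|E|)%nat -> d * #|E|%:R <= #|okp|%:R.
Proof.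
move=> hd h.
have [d0 d2] := @hd_conv d hd.
have hC := cardC okp.
have hR : #|okp|%:R + #|[predC okp]|%:R = #|E|%:R :> R by rewrite -natrD hC.
have h' : 2%:R * #|[predC okp]|%:R <= #|E|%:R :> R by rewrite -natrM ler_nat.
have hE : 0 <= #|E|%:R :> R by rewrite ler0n.
clear hd hC h; rewrite mulr2n in d2; nra.
Qed.

Lemma sat_good (K N : nat) (d : R) (b : bool) : (0 < d < 1/2)%R -> (2 <= K)%nat ->
  forall x : {ffun 'I_N -> bool},
  d * #|{: {ffun 'I_K -> 'I_N} * {ffun 'I_K -> bool}}|%:R <=
  #|[pred y : ({ffun 'I_K -> 'I_N} * {ffun 'I_K -> bool})%type |
     ([ffun j => x (y.1 j)] != y.2) && (b || ([ffun j => x (y.1 j)] != [ffun j => ~~ y.2 j]))]|%:R.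
Proof.
move=> hd hK x; apply: good_from_bad => //.
apply: leq_trans (_ : 2 * (2 * #|{: {ffun 'I_K -> 'I_N}}|) <= _)%nat.
  rewrite leq_mul2l /=.
  apply: leq_trans (bad_pairs (fun v : {ffun 'I_K -> 'I_N} => [ffun j => x (v j)])
                              (fun v => [ffun j => ~~ x (v j)])).
  apply: subset_leq_card; apply/subsetP => [[v a]]; rewrite !inE /= negb_and !negbK.
  case/orP => [/eqP ->|]; first by rewrite eqxx.
  case: b => //=; rewrite negbK => /eqP h; apply/orP; right; apply/eqP.
  by apply/ffunP => j; rewrite ffunE -[a j]negbK -(ffunE (fun j => ~~ a j)) -h ffunE.
rewrite card_prod mulnA [X in (_ <= X)%nat]mulnC leq_mul2r; apply/orP; right.
rewrite card_ffun card_bool card_ord.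
by rewrite (_ : (2 * 2 = expn 2 2)%nat) // leq_exp2l.
Qed.

Lemma unif_ffun (E : finType) (n : nat) (P : pred {ffun 'I_n -> E}) :
  unif_prob P = #|P|%:R / (#|E|%:R ^+ n).
Proof. by rewrite /unif_prob !INRE card_ffun card_ord natrX. Qed.

Lemma model_bound (E X : finType) (ok : X -> E -> bool) (N M m : nat) (d : R)
  (Bad : pred {ffun 'I_M -> E}) :
  (0 < d < 1/2)%R -> (0 < #|E|)%nat ->
  (forall G : {ffun 'I_M -> E}, satF ok G -> ~~ Bad G ->
    exists x, [forall e, ok x (G e)] /\ d * #|E|%:R <= #|[pred y | ok x y]|%:R) ->
  #|Bad|%:R <= exp (Hent d * INR N) * ((d + d) * #|E|%:R) ^+ M ->
  (unif_prob [pred G | @satF X E ok (M + m) G] >=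
   d ^ m * unif_prob [pred G | @satF X E ok M G]
   - (2 * d) ^ (M + 1) * exp (Hent d * INR N + - ln (2 * d)))%R.
Proof.
move=> hd hE hgood hbad.
have [d0 d2] := @hd_conv d hd.
rewrite !unif_ffun -!RpowE.
apply: (@final_arith _ _ (#|Bad|%:R) _ _ (exp (Hent d * INR N))).
- by apply/RltP; rewrite ltr0n.
- exact: hd.
- by apply/RleP; rewrite ler0n.
- by apply/RleP; rewrite RpowE.
- by apply: Rle_refl.
- apply/RleP; rewrite RpowE; apply: general_count => //.
  exact: ltW.
Qed.

Local Close Scope ring_scope.
Delimit Scope nat_scope with N.

Theorem lemma3 :
  forall (mdl : model), valid_model mdl ->
  forall delta : R, (0 < delta < 1 / 2)%R ->
  exists o : nat -> R,
    Un_cv (fun N => (o N / INR N)%R) 0%R /\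
    forall N M m : nat, (0 < N)%N -> (0 < M)%N -> (0 < m)%N ->
      (p mdl N (M + m) >=
         delta ^ m * p mdl N M
         - (2 * delta) ^ (M + 1) * exp (Hent delta * INR N + o N))%R.
Proof.
move=> mdl hv d hd.
exists (fun _ => - ln (2 * d))%R; split; first exact: cv_const.
move=> N M m hN hM hm.
have [d0 d2] := @hd_conv d hd.
case: mdl hv => [q|K|K] hv /=.
- have e1 : forall n, unif_prob (@col_sat q N n) = unif_prob [pred G | @satF _ _ (@okC q N) n G].
    by move=> n; rewrite /unif_prob; congr (INR _ / _)%R; apply: eq_card.
  rewrite !e1; apply: (model_bound _ (Bad := BadC d)) => //.
  + by rewrite card_prod card_ord muln_gt0 hN.
  + move=> G hs hb; have /existsP [x hx] := hs; exists x; split => //.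
    exact: (col_good hd hx hb).
  + apply: le_trans (bad_count N M hd) _.
    by rewrite card_prod card_ord natrM mulr2n.
- have e1 : forall n, unif_prob (@ksat_sat K N n) = unif_prob [pred G | @satF _ _
      (fun (x : {ffun 'I_N -> bool}) (y : ({ffun 'I_K -> 'I_N} * {ffun 'I_K -> bool})%type) =>
         ([ffun j => x (y.1 j)] != y.2) && (true || ([ffun j => x (y.1 j)] != [ffun j => ~~ y.2 j]))) n G].
    move=> n; rewrite /unif_prob; congr (INR _ / _)%R; apply: eq_card => G.
    by rewrite !inE /ksat_sat /satF; apply: eq_existsb => x; apply: eq_forallb => e; rewrite orTb andbT.
  rewrite !e1; apply: (model_bound _ (Bad := pred0)) => //.
  + by rewrite card_prod !card_ffun !card_ord card_bool muln_gt0 !expn_gt0 hN.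
  + move=> G hs hb; have /existsP [x hx] := hs; exists x; split => //.
    exact: (sat_good true hd hv x).
  + rewrite card0 mulr_ge0 // ?exprn_ge0 //.
      by apply/RleP; apply: Rlt_le; apply: exp_pos.
    by rewrite mulr_ge0 ?ler0n // addr_ge0 // ltW.
- have e1 : forall n, unif_prob (@naesat_sat K N n) = unif_prob [pred G | @satF _ _
      (fun (x : {ffun 'I_N -> bool}) (y : ({ffun 'I_K -> 'I_N} * {ffun 'I_K -> bool})%type) =>
         ([ffun j => x (y.1 j)] != y.2) && (false || ([ffun j => x (y.1 j)] != [ffun j => ~~ y.2 j]))) n G].
    by move=> n; rewrite /unif_prob; congr (INR _ / _)%R; apply: eq_card.
  rewrite !e1; apply: (model_bound _ (Bad := pred0)) => //.
  + by rewrite card_prod !card_ffun !card_ord card_bool muln_gt0 !expn_gt0 hN.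
  + move=> G hs hb; have /existsP [x hx] := hs; exists x; split => //.
    exact: (sat_good false hd hv x).
  + rewrite card0 mulr_ge0 // ?exprn_ge0 //.
      by apply/RleP; apply: Rlt_le; apply: exp_pos.
    by rewrite mulr_ge0 ?ler0n // addr_ge0 // ltW.
Qed.
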